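(* The Levi graph $LG_2$ has no proper distinguishing monochromatic $3$-coloring.
   Context: Let $V=\mathbb{F}_2^3$; $LG_2$ is the bipartite graph whose vertices are the $1$-dimensional subspaces (''points'') and the $2$-dimensional subspaces (''lines'') of $V$, a point being adjacent to a line iff it is contained in it. A coloring of $LG_2$ is monochromatic if all points receive the same color or all lines receive the same color. A coloring is distinguishing if the only graph automorphism mapping every color class onto itself is the identity. *)

(* Defs.v *)
From HB Require Import structures.
From mathcomp Require Import all_boot all_order all_algebra all_fingroup.
Set Implicit Arguments. Unset Strict Implicit. Unset Printing Implicit Defensive.
Import GRing.Theory.
Local Open Scope ring_scope.

(* V = F_2^3 as row vectors; a subspace of V is represented by its canonical
   generating matrix A : 'M['F_2]_3 with <<A>> = A (mxalgebra's genmx),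
   and its dimension is \rank A. *)

Definition is_LG2_vertex (A : 'M['F_2]_3) : bool :=
  ((<<A>>)%MS == A) && ((\rank A == 1%N) || (\rank A == 2%N)).

Definition LG2 := {A : 'M['F_2]_3 | is_LG2_vertex A}.

Definition is_point (v : LG2) : bool := \rank (val v) == 1%N.
Definition is_line (v : LG2) : bool := \rank (val v) == 2%N.

Definition incident (p l : LG2) : bool :=
  [&& is_point p, is_line l & (val p <= val l)%MS].

Definition LG2_adj (u v : LG2) : bool := incident u v || incident v u.

Definition LG2_aut (f : {perm LG2}) : Prop :=
  forall u v, LG2_adj (f u) (f v) = LG2_adj u v.

Definition proper_coloring k (c : LG2 -> 'I_k) : Prop :=
  forall u v, LG2_adj u v -> c u != c v.

Definition monochromatic_coloring k (c : LG2 -> 'I_k) : Prop :=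
  (forall p q, is_point p -> is_point q -> c p = c q) \/
  (forall l m, is_line l -> is_line m -> c l = c m).

Definition preserves_colors k (c : LG2 -> 'I_k) (f : {perm LG2}) : Prop :=
  forall v, c (f v) = c v.

Definition distinguishing_coloring k (c : LG2 -> 'I_k) : Prop :=
  forall f : {perm LG2}, LG2_aut f -> preserves_colors c f -> f = 1%g.

(* Main.v *)
Require Import Defs.
From HB Require Import structures.
From mathcomp Require Import all_boot all_order all_algebra all_fingroup.
Set Implicit Arguments. Unset Strict Implicit. Unset Printing Implicit Defensive.
Import GRing.Theory.
Local Open Scope ring_scope.

Definition GL3 := {'GL_3['F_2]}.
Lemma GLu (g : GL3) : (GLval g) \in unitmx.
Proof. exact: GL_unit. Qed.

Definition actv (M : 'M['F_2]_3) (v : LG2) : LG2 := insubd v (<<val v *m M>>)%MS.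

Lemma actv_val M v : M \in unitmx -> val (actv M v) = (<<val v *m M>>)%MS.
Proof.
move=> uM; rewrite /actv val_insubd /is_LG2_vertex genmx_id eqxx mxrank_gen.
rewrite mxrankMfree ?row_free_unit //.
by case/andP: (valP v) => _ ->.
Qed.

Lemma actv_rank M v : M \in unitmx -> \rank (val (actv M v)) = \rank (val v).
Proof. by move=> uM; rewrite actv_val // mxrank_gen mxrankMfree ?row_free_unit. Qed.

Lemma vgen (v : LG2) : (<<val v>>)%MS = val v.
Proof. by case/andP: (valP v) => /eqP. Qed.

Lemma actv_inj M : M \in unitmx -> injective (actv M).
Proof.
move=> uM u v /(congr1 val); rewrite !actv_val // => /eqP.
rewrite -/(is_true _) (sameP eqP genmxP) => /andP[h1 h2].
apply: val_inj; rewrite -(vgen u) -(vgen v); apply/genmxP.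
by rewrite !submxMfree ?row_free_unit // in h1 h2; rewrite h1 h2.
Qed.

Definition actp (g : GL3) : {perm LG2} := perm (actv_inj (GLu g)).

Lemma actpE g v : val (actp g v) = (<<val v *m GLval g>>)%MS.
Proof. by rewrite permE actv_val ?GLu. Qed.

Lemma actp_point g v : is_point (actp g v) = is_point v.
Proof. by rewrite /is_point permE actv_rank ?GLu. Qed.
Lemma actp_line g v : is_line (actp g v) = is_line v.
Proof. by rewrite /is_line permE actv_rank ?GLu. Qed.

Lemma actp_aut g : LG2_aut (actp g).
Proof.
have H u v : incident (actp g u) (actp g v) = incident u v.
  by rewrite /incident actp_point actp_line !actpE !genmxE submxMfree ?row_free_unit ?GLu.
by move=> u v; rewrite /LG2_adj !H.
Qed.

Lemma actpM g h v : actp (g * h)%g v = actp h (actp g v).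
Proof.
apply: val_inj; rewrite !actpE GL_MxE mulmxA.
apply: eq_genmx; apply: eqmxMr; apply: eqmx_sym; exact: genmxE.
Qed.

Lemma d0P : is_LG2_vertex (<<delta_mx 0 0 : 'rV['F_2]_3>>)%MS.
Proof.
rewrite /is_LG2_vertex genmx_id eqxx mxrank_gen rank_rV.
suff -> : (delta_mx 0 0 : 'rV['F_2]_3) != 0 by [].
by apply/eqP => /matrixP/(_ 0 0); rewrite !mxE /= => /eqP; rewrite oner_eq0.
Qed.
Definition d0 : LG2 := Sub _ d0P.

Definition mkv m (A : 'M['F_2]_(m, 3)) : LG2 := insubd d0 (<<A>>)%MS.
Lemma mkv_val m (A : 'M['F_2]_(m, 3)) :
  (\rank A == 1%N) || (\rank A == 2%N) -> val (mkv A) = (<<A>>)%MS.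
Proof. by move=> h; rewrite /mkv val_insubd /is_LG2_vertex genmx_id eqxx mxrank_gen h. Qed.

Lemma mkv_rank m (A : 'M['F_2]_(m, 3)) :
  (\rank A == 1%N) || (\rank A == 2%N) -> \rank (val (mkv A)) = \rank A.
Proof. by move=> h; rewrite mkv_val // mxrank_gen. Qed.

Lemma nz_row m n (A : 'M['F_2]_(m, n)) : A != 0 -> exists i, row i A != 0.
Proof.
move=> nzA; case: (boolP [exists i, row i A != 0]) => [/existsP//|/existsPn h].
case/eqP: nzA; apply/row_matrixP => i; rewrite row0; apply/eqP.
by move: (h i); rewrite negbK.
Qed.

Lemma nz_col m n (A : 'M['F_2]_(m, n)) : A != 0 -> exists j, col j A != 0.
Proof.
move=> nzA; have : A^T != 0 by apply: contra nzA => /eqP; rewrite -trmx0 => /trmx_inj ->.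
case/nz_row => j hj; exists j; apply: contra hj => /eqP h.
by rewrite -tr_col h trmx0.
Qed.

Lemma rank_nz m n (A : 'M['F_2]_(m, n)) : (0 < \rank A)%N -> A != 0.
Proof. by apply: contraTneq => ->; rewrite mxrank0. Qed.

Lemma vrank (v : LG2) : (\rank (val v) == 1%N) || (\rank (val v) == 2%N).
Proof. by case/andP: (valP v). Qed.

Lemma point_or_line v : is_point v || is_line v.
Proof. exact: vrank. Qed.

Lemma mkv_eq (v : LG2) m (A : 'M['F_2]_(m, 3)) :
  (A <= val v)%MS -> \rank A = \rank (val v) -> mkv A = v.
Proof.
move=> sA rA; have hr : (\rank A == 1%N) || (\rank A == 2%N) by rewrite rA vrank.
apply: val_inj; rewrite mkv_val // -(vgen v); apply: eq_genmx; apply/eqmxP.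
by rewrite -(mxrank_leqif_eq sA) rA.
Qed.

Lemma line_has_point l : is_line l -> exists p, incident p l.
Proof.
move=> hl; have : val l != 0 by apply: rank_nz; rewrite (eqP hl).
case/nz_row => i hi.
have hr : \rank (row i (val l)) = 1%N by rewrite rank_rV hi.
exists (mkv (row i (val l))); rewrite /incident hl /is_point mkv_rank ?hr //.
by rewrite mkv_val ?hr // genmxE row_sub.
Qed.

Lemma point_on_line p : is_point p -> exists l, incident p l.
Proof.
move=> hp; set P := val p.
have : ~~ [forall i, ((delta_mx 0 i : 'rV['F_2]_3) <= P)%MS].
  apply/negP => /forallP h.
  have : (1%:M <= P)%MS by apply/row_subP => i; rewrite row1; exact: h.
  by move/mxrankS; rewrite mxrank1 (eqP hp).
case/forallPn => i hi; set e := (delta_mx 0 i : 'rV['F_2]_3) in hi.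
have he : \rank e = 1%N.
  have nz : e != 0 by apply: contraNneq hi => ->; exact: sub0mx.
  by rewrite rank_rV nz.
have h1 : (\rank P < \rank (P + e)%MS)%N.
  by rewrite (ltn_leqif (mxrank_leqif_sup (addsmxSl P e))) addsmx_sub submx_refl.
have h2 : (\rank (P + e)%MS <= 2)%N.
  by have := leq_of_leqif (mxrank_adds_leqif P e); rewrite (eqP hp) he.
have hr : \rank (P + e)%MS = 2%N by move: h1 h2; rewrite (eqP hp); case: (\rank _) => [|[|[|]]].
exists (mkv (P + e)%MS); rewrite /incident hp /is_line mkv_rank ?hr //.
by rewrite mkv_val ?hr // genmxE addsmxSl.
Qed.

Definition Dp := {v : 'rV['F_2]_3 | v != 0}.
Definition parp (d : Dp) : LG2 := mkv (val d).
Lemma card_Dp : #|{: Dp}| = 7%N.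
Proof. by rewrite card_sig cardC1 card_mx card_Fp. Qed.

Lemma parp_surj p : is_point p -> exists d : Dp, parp d = p.
Proof.
move=> hp; have : val p != 0 by apply: rank_nz; rewrite (eqP hp).
case/nz_row => i hi; exists (exist (fun v => v != 0) _ hi); rewrite /parp /=.
by apply: mkv_eq; rewrite ?row_sub // rank_rV hi (eqP hp).
Qed.

Definition Dl := {w : 'cV['F_2]_3 | w != 0}.
Definition parl (d : Dl) : LG2 := mkv (kermx (val d)).
Lemma card_Dl : #|{: Dl}| = 7%N.
Proof. by rewrite card_sig cardC1 card_mx card_Fp. Qed.

Lemma rank_ker_cV (w : 'cV['F_2]_3) : w != 0 -> \rank (kermx w) = 2%N.
Proof.
move=> nz; rewrite mxrank_ker -mxrank_tr rank_rV.
suff -> : w^T != 0 by [].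
by apply: contra nz => /eqP; rewrite -(trmx0 _ 3 1) => /trmx_inj ->.
Qed.

Lemma parl_surj l : is_line l -> exists d : Dl, parl d = l.
Proof.
move=> hl; set C := cokermx (val l).
have : C != 0 by apply: rank_nz; rewrite mxrank_coker (eqP hl).
case/nz_col => j hj; exists (exist (fun v => v != 0) _ hj); rewrite /parl /=.
have sL : (val l <= kermx (col j C))%MS.
  apply/sub_kermxP; apply: trmx_inj.
  by rewrite trmx_mul tr_col -row_mul -trmx_mul mulmx_coker trmx0 row0 trmx0.
apply: mkv_eq; last by rewrite rank_ker_cV // (eqP hl).
by rewrite -(mxrank_leqif_sup sL) rank_ker_cV // (eqP hl).
Qed.

Lemma F2_nz1 (a : 'F_2) : a != 0 -> a = 1.
Proof. by case: a => [[|[|n]] ?] //= _; apply: val_inj. Qed.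

Lemma actp_eq1 g : actp g = 1%g -> g = 1%g.
Proof.
move=> H; apply: val_inj; rewrite /=.
apply/row_matrixP => i; set e := (delta_mx 0 i : 'rV['F_2]_3).
have nze : e != 0.
  by apply/eqP => /matrixP/(_ 0 i); rewrite !mxE !eqxx /= => /eqP; rewrite oner_eq0.
have re : \rank e = 1%N by rewrite rank_rV nze.
have h := congr1 val (congr1 (fun f : {perm LG2} => f (mkv e)) H).
rewrite perm1 actpE mkv_val ?re // in h.
have : (<<<<e>> *m GLval g>> <= <<e>>)%MS by rewrite h.
rewrite !genmxE => h'.
have : (e *m GLval g <= e)%MS.
  apply: submx_trans h'; apply: submxMr; by rewrite genmxE.
case/sub_rVP => a ha.
have nza : a != 0.
  apply: contra nze => /eqP a0; move: ha; rewrite a0 scale0r => /eqP.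
  by rewrite -mxrank_eq0 mxrankMfree ?row_free_unit ?GLu // mxrank_eq0.
rewrite row1 -[X in row i X]mul1mx row_mul row1 ha (F2_nz1 nza) scale1r.
done.
Qed.

Definition oth (c0 : 'I_3) : 'I_3 := if c0 == ord0 then inord 1 else ord0.

Lemma col3 (x y c0 : 'I_3) :
  x != c0 -> y != c0 -> (x == oth c0) = (y == oth c0) -> x = y.
Proof.
rewrite /oth.
case: x => [[|[|[|?]]] hx] //; case: y => [[|[|[|?]]] hy] //;
case: c0 => [[|[|[|?]]] hc] //; rewrite /eq_op /= ?inordK //=;
by move=> *; apply: val_inj.
Qed.

Lemma card_GL3 : #|{: GL3}| = 168%N.
Proof.
have := card_GL 'F_2 (isT : (0 < 3)%N); rewrite /GLgroup cardsT => ->.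
by rewrite card_Fp // big_ltn // big_ltn // big_ltn // big_geq.
Qed.

Lemma actp1 v : actp 1%g v = v.
Proof. by apply: val_inj; rewrite actpE GL_1E mulmx1 vgen. Qed.

Lemma key (T : pred LG2) (D : finType) (par : D -> LG2) (c : LG2 -> 'I_3) (c0 : 'I_3) :
  #|{: D}| = 7%N -> (forall v, T v -> exists d, par d = v) ->
  (forall g v, T (actp g v) = T v) ->
  (forall v, ~~ T v -> c v = c0) -> (forall v, T v -> c v != c0) ->
  exists g, actp g != 1%g /\ preserves_colors c (actp g).
Proof.
move=> cD surj Tst cN cT.
pose phi (g : GL3) : {ffun D -> bool} := [ffun d => c (actp g (par d)) == oth c0].
have : ~~ injectiveb phi.
  apply/injectiveP => inj; have := leq_card phi inj.
  by rewrite card_ffun card_bool cD card_GL3.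
case/injectivePn => g [h neq e].
exists (g^-1 * h)%g; split.
  apply: contra neq => /eqP /actp_eq1 e1.
  by apply/eqP; rewrite -(mulKVg g h) e1 mulg1.
move=> v; rewrite actpM; case: (boolP (T v)) => Tv; last first.
  by rewrite (cN v Tv) cN // !Tst.
set w := actp (g^-1)%g v.
have Tw : T w by rewrite Tst.
have [d pd] := surj w Tw.
have := congr1 (fun f : {ffun D -> bool} => f d) e; rewrite /phi !ffunE pd => e'.
have -> : c (actp h w) = c (actp g w).
  by apply: col3 (esym e'); rewrite ?cT ?Tst.
by rewrite -actpM mulVg actp1.
Qed.

Lemma d0_point : is_point d0.
Proof. by case/orP: (vrank d0) => // /eqP; rewrite /= mxrank_gen rank_rV; case: (_ != 0). Qed.

Lemma notline v : ~~ is_line v -> is_point v.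
Proof. by case/orP: (point_or_line v) => // ->. Qed.
Lemma notpoint v : ~~ is_point v -> is_line v.
Proof. by case/orP: (point_or_line v) => [->|]. Qed.

Theorem mainTheorem14 :
  ~ (exists c : LG2 -> 'I_3,
        [/\ proper_coloring c, distinguishing_coloring c & monochromatic_coloring c]).
Proof.
case=> c [prop dist mono].
have nog g : actp g != 1%g -> preserves_colors c (actp g) -> False.
  by move=> /eqP ne pc; apply: ne; apply: dist => //; exact: actp_aut.
case: mono => [hp|hl].
- have cT : forall v, is_line v -> c v != c d0.
    move=> v lv; have [p ip] := line_has_point lv.
    have := prop p v; rewrite /LG2_adj ip => /(_ isT).
    have pp : is_point p by case/and3P: ip.
    by rewrite (hp p d0 pp d0_point) eq_sym.
  have [g [ne pc]] := key (T := is_line) (c0 := c d0) card_Dl parl_surj actp_line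
    (fun v nv => hp v d0 (notline nv) d0_point) cT.
  exact: nog ne pc.
- have [l0 il0] := point_on_line d0_point.
  have l0l : is_line l0 by case/and3P: il0.
  have cT : forall v, is_point v -> c v != c l0.
    move=> v pv; have [l il] := point_on_line pv.
    have := prop v l; rewrite /LG2_adj il => /(_ isT).
    have ll : is_line l by case/and3P: il.
    by rewrite (hl l l0 ll l0l).
  have [g [ne pc]] := key (T := is_point) (c0 := c l0) card_Dp parp_surj actp_point
    (fun v nv => hl v l0 (notpoint nv) l0l) cT.
  exact: nog ne pc.
Qed.
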